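(* Let $\Sigma$ be a canonical ambiguous experiment. Then $\tau^{*} \in BR(\Sigma)$ if and only if there exists $\pi \in K^{*}(\Sigma)$ such that for all $a, b \in A$, $$\sum_{\omega \in \Omega} \pi(\omega,a)\,[u_r(b,\omega) - u_r(a,\omega)] \le 0.$$
   Context: Setting: $\Omega$ is a finite set of states, $A$ a finite set of receiver actions, $u_r: A \times \Omega \to \mathbb{R}$ the receiver's payoff. $P \subseteq \Delta(\Omega)$ is a nonempty closed convex set of priors; the receiver has maxmin expected utility preferences. A canonical experiment is $\sigma: \Omega \to \Delta(A)$; a canonical ambiguous experiment is a nonempty closed convex set $\Sigma$ of canonical experiments. A receiver strategy is $\tau: A \to \Delta(A)$. $u_r(p,\sigma,\tau) = \sum_{\omega,m,a} p(\omega)\sigma(m\mid\omega)\tau(a\mid m)u_r(a,\omega)$, $U_r(\Sigma,\tau) = \min_{p \in P}\min_{\sigma \in \Sigma} u_r(p,\sigma,\tau)$, and $BR(\Sigma) = \arg\max_{\tau} U_r(\Sigma,\tau)$ over all $\tau: A \to \Delta(A)$. The obedient strategy $\tau^{*}$ is $\tau^{*}(a\mid a) = 1$ for all $a$. For $p \in P$, $\sigma \in \Sigma$, $\pi^{(p,\sigma)} \in \Delta(\Omega \times A)$ is $\pi^{(p,\sigma)}(\omega,a) = p(\omega)\sigma(a\mid\omega)$; $\Pi(\Sigma) = \{\pi^{(p,\sigma)} : p \in P, \sigma \in \Sigma\}$; $\overline{co}(\Pi(\Sigma))$ is its closed convex hull; and $K^{*}(\Sigma) = \arg\min_{\pi \in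 \overline{co}(\Pi(\Sigma))} \sum_{a,\omega} \pi(\omega,a) u_r(a,\omega)$. *)

(* Defs.v *)
From HB Require Import structures.
From mathcomp Require Import all_boot all_order all_algebra.
From mathcomp Require Import all_classical all_reals all_analysis.
Import numFieldNormedType.Exports.
Set Implicit Arguments. Unset Strict Implicit. Unset Printing Implicit Defensive.
Import Order.TTheory GRing.Theory Num.Theory.
Local Open Scope classical_set_scope.
Local Open Scope ring_scope.

Section Model.
Variables (R : realType) (Omega A : finType).

Definition is_dist (T : finType) (p : T -> R) : Prop :=
  (forall t, 0 <= p t) /\ \sum_(t : T) p t = 1.

Definition convex_fset (T : Type) (S : set (T -> R)) : Prop :=
  forall x y (t : R), S x -> S y -> 0 <= t <= 1 ->
    S (fun z => t * x z + (1 - t) * y z).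

Definition convex_exp (S : set (Omega -> A -> R)) : Prop :=
  forall x y (t : R), S x -> S y -> 0 <= t <= 1 ->
    S (fun w a => t * x w a + (1 - t) * y w a).

Definition is_experiment (s : Omega -> A -> R) : Prop :=
  forall w, is_dist (s w).

Definition is_strategy (tau : A -> A -> R) : Prop :=
  forall m, is_dist (tau m).

Definition ur (u : A -> Omega -> R) (p : Omega -> R) (s : Omega -> A -> R)
  (tau : A -> A -> R) : R :=
  \sum_(w : Omega) \sum_(m : A) \sum_(a : A) p w * s w m * tau m a * u a w.

(* U_r(Sigma, tau) = min_{p in P} min_{sigma in Sigma} u_r(p, sigma, tau);
   written as an infimum (attained when P, Sigma are nonempty compact) *)
Definition Ur (u : A -> Omega -> R) (P : set (Omega -> R))
  (Sigma : set (Omega -> A -> R)) (tau : A -> A -> R) : R :=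
  inf [set ur u p s tau | p in P & s in Sigma].

Definition BR (u : A -> Omega -> R) (P : set (Omega -> R))
  (Sigma : set (Omega -> A -> R)) : set (A -> A -> R) :=
  [set tau | is_strategy tau /\
     forall tau', is_strategy tau' -> Ur u P Sigma tau' <= Ur u P Sigma tau].

Definition obedient : A -> A -> R := fun m a => if m == a then 1 else 0.

Definition joint (p : Omega -> R) (s : Omega -> A -> R) : Omega * A -> R :=
  fun wa => p wa.1 * s wa.1 wa.2.

Definition Pi (P : set (Omega -> R)) (Sigma : set (Omega -> A -> R))
  : set (Omega * A -> R) :=
  [set joint p s | p in P & s in Sigma].

Definition conv_hull (T : Type) (S : set (T -> R)) : set (T -> R) :=
  [set y | exists (n : nat) (l : 'I_n -> R) (x : 'I_n -> T -> R),
     (forall i, 0 <= l i) /\ \sum_(i < n) l i = 1 /\ (forall i, S (x i)) /\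
     y = (fun z => \sum_(i < n) l i * x i z)].

(* closed convex hull, closure in the pointwise (= Euclidean, since Omega*A is
   finite) topology on Omega*A -> R *)
Definition clco_Pi (P : set (Omega -> R)) (Sigma : set (Omega -> A -> R))
  : set (Omega * A -> R) :=
  @closure {ptws (Omega * A)%type -> R} (conv_hull (Pi P Sigma)).

Definition exp_util (u : A -> Omega -> R) (pi : Omega * A -> R) : R :=
  \sum_(a : A) \sum_(w : Omega) pi (w, a) * u a w.

Definition Kstar (u : A -> Omega -> R) (P : set (Omega -> R))
  (Sigma : set (Omega -> A -> R)) : set (Omega * A -> R) :=
  [set pi | clco_Pi P Sigma pi /\
     forall pi', clco_Pi P Sigma pi' -> exp_util u pi <= exp_util u pi'].

End Model.

(* Main.v *)
Require Import Defs.
From HB Require Import structures.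
From mathcomp Require Import all_boot all_order all_algebra.
From mathcomp Require Import all_classical all_reals all_analysis.
From mathcomp Require Import ring lra.
Import numFieldNormedType.Exports.
Import Order.TTheory GRing.Theory Num.Theory.
Set Implicit Arguments. Unset Strict Implicit. Unset Printing Implicit Defensive.
Local Open Scope classical_set_scope.
Local Open Scope ring_scope.

Lemma maxsq (R : realDomainType) (x y : R) :
  Order.max (x + y) 0 * Order.max (x + y) 0 <=
  Order.max x 0 * Order.max x 0 + 2 * Order.max x 0 * y + y * y.
Proof. case: (lerP (x + y) 0) => h1; case: (lerP x 0) => h2; nra. Qed.

Lemma maxmul (R : realDomainType) (x : R) :
  Order.max x 0 * x = Order.max x 0 * Order.max x 0.
Proof. by case: (lerP x 0) => h; rewrite ?mul0r. Qed.

Lemma ptws_cvg (R : realType) (I : choiceType) (F : set_system (I -> R))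
  (f : I -> R) : Filter F ->
  (forall i, (fun g => g i) @ F --> f i) -> F --> (f : {ptws I -> R}).
Proof.
move=> FF pf.
apply/(@cvg_sup _ _ (fun i => Topological.class
    (initial_topology (fun f : (I -> R) => f i)))) => i.
rewrite cvg_image; last by rewrite eqEsubset; split=> v // _; exists (cst v).
move=> W /= /pf; rewrite ?nbhs_simpl => Q; exists (@^~ i @^-1` W) => //.
by rewrite eqEsubset; split => [j [? + <-//]|j Wj]; exists (fun _ => j).
Qed.

Section Helpers.
Variables (R : realType) (Omega A : finType).
Local Notation T := {ptws (Omega * A)%type -> R}.

Definition Lin (c : Omega * A -> R) (pi : Omega * A -> R) : R :=
  \sum_(w : Omega) \sum_(m : A) pi (w, m) * c (w, m).

Lemma sum_cont (I : Type) (r : seq I) (g : I -> T -> R) :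
  (forall i, continuous (g i)) -> continuous (fun x : T => \sum_(i <- r) g i x).
Proof.
move=> hg; elim: r => [|i r IH].
  rewrite (_ : (fun x : T => _) = fun _ => 0); first exact: cst_continuous.
  by apply/funext => x; rewrite big_nil.
rewrite (_ : (fun x : T => _) = fun x => g i x + \sum_(j <- r) g j x); last first.
  by apply/funext => x; rewrite big_cons.
by move=> x; apply: continuousD; [exact: hg|exact: IH].
Qed.

Lemma coord_cont (x : (Omega * A)%type) : continuous (fun z : T => z x).
Proof. exact: (@proj_continuous _ (fun _ : (Omega * A)%type => R) x). Qed.

Lemma Lin_cont c : continuous (Lin c : T -> R).
Proof.
apply: sum_cont => w; apply: sum_cont => m x.
apply: continuousM; last exact: cst_continuous.
exact: coord_cont.
Qed.

Lemma Lin_comb c (s r : R) x y :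
  Lin c (fun z => s * x z + r * y z) = s * Lin c x + r * Lin c y.
Proof.
rewrite /Lin !mulr_sumr -big_split; apply: eq_bigr => w _.
rewrite !mulr_sumr -big_split; apply: eq_bigr => m _.
by rewrite mulrDl !mulrA.
Qed.

Lemma Lin_opp c x : Lin (fun z => - c z) x = - Lin c x.
Proof.
rewrite /Lin -sumrN; apply: eq_bigr => w _.
rewrite -sumrN; apply: eq_bigr => m _; by rewrite mulrN.
Qed.

Lemma Lin_sum c n (l : 'I_n -> R) (x : 'I_n -> Omega * A -> R) :
  Lin c (fun z => \sum_(i < n) l i * x i z) = \sum_(i < n) l i * Lin c (x i).
Proof.
rewrite /Lin.
rewrite [RHS](eq_bigr (fun i => \sum_w \sum_m l i * x i (w,m) * c (w,m))); last first.
  move=> i _; rewrite mulr_sumr; apply: eq_bigr => w _; rewrite mulr_sumr.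
  by apply: eq_bigr => m _; rewrite mulrA.
rewrite [RHS]exchange_big; apply: eq_bigr => w _.
rewrite [RHS]exchange_big; apply: eq_bigr => m _.
by rewrite mulr_suml.
Qed.

Lemma affine_cont (t s : R) (y : Omega * A -> R) :
  continuous (fun z : T => ((fun x => t * z x + s * y x) : T)).
Proof.
move=> z.
have h : forall i, continuous (fun z : T => t * z i + s * y i).
  move=> i z'; apply: (continuousD (f := fun z : T => t * z i) (g := fun _ => s * y i)); last exact: cst_continuous.
  apply: (continuousM (s := fun _ => t) (t := fun z : T => z i)); first exact: cst_continuous.
  exact: coord_cont.
apply: (@ptws_cvg R (Omega * A)%type
  ((fun z0 : T => (fun x => t * z0 x + s * y x) : Omega * A -> R) @ nbhs z)
  (fun x => t * z x + s * y x) _ (fun i => h i z)).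
Qed.

Lemma closure_pre (U : topologicalType) (f : T -> U) (H : set T) (D : set U) :
  continuous f -> closed D -> (forall z, H z -> D (f z)) ->
  forall z, closure H z -> D (f z).
Proof.
move=> fc Dc HD z Hz.
have cl : closed (f @^-1` D) by apply: preimage_closed => // ? _; apply: fc.
have := @closureS _ H (f @^-1` D) HD z Hz.
by rewrite -(closure_id _).1.
Qed.

Lemma Lin_closure c c0 (H : set T) :
  (forall z, H z -> c0 <= Lin c z) -> forall z, closure H z -> c0 <= Lin c z.
Proof.
move=> HH z Hz.
exact: (@closure_pre _ (Lin c) H [set x | c0 <= x] (@Lin_cont c) (closed_ge (y := c0)) HH z Hz).
Qed.

Lemma Lin_hull c c0 (S : set (Omega * A -> R)) :
  (forall z, S z -> c0 <= Lin c z) -> forall z, conv_hull S z -> c0 <= Lin c z.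
Proof.
move=> HS z [n [l [x [l0 [l1 [Sx ->]]]]]].
rewrite Lin_sum -[c0]mul1r -l1 mulr_suml; apply: ler_sum => i _.
by apply: ler_wpM2l => //; apply: HS.
Qed.
Lemma hull_add (S : set (Omega * A -> R)) z y (t : R) :
  conv_hull S z -> S y -> 0 <= t <= 1 ->
  conv_hull S (fun x => (1 - t) * z x + t * y x).
Proof.
move=> [n [l [x [l0 [l1 [Sx ->]]]]]] Sy /andP[t0 t1].
exists n.+1.
exists (fun i => if unlift ord0 i is Some j then (1 - t) * l j else t).
exists (fun i => if unlift ord0 i is Some j then x j else y).
split; [|split; [|split]].
- move=> i; case: (unlift ord0 i) => [j|] //.
  by apply: mulr_ge0 => //; rewrite subr_ge0.
- rewrite big_ord_recl unlift_none.
  under eq_bigr do rewrite liftK.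
  by rewrite -mulr_sumr l1 mulr1 addrC subrK.
- by move=> i; case: (unlift ord0 i).
- apply/funext => w; rewrite big_ord_recl unlift_none.
  under [in RHS]eq_bigr do rewrite liftK.
  rewrite addrC; congr (_ + _); rewrite mulr_sumr; apply: eq_bigr => i _.
  by rewrite mulrA.
Qed.
End Helpers.

Section Model.
Variables (R : realType) (Omega A : finType).
Variables (u : A -> Omega -> R) (P : set (Omega -> R))
  (Sigma : set (Omega -> A -> R)).
Local Notation T := {ptws (Omega * A)%type -> R}.
Local Notation K := (clco_Pi P Sigma).

Lemma Pi_sub z : Pi P Sigma z -> K z.
Proof.
move=> Pz; apply: subset_closure.
exists 1%N, (fun _ => 1), (fun _ => z); split; [|split; [|split]] => //.
- by rewrite big_ord1.
- by apply/funext => x; rewrite big_ord1 mul1r.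
Qed.

Lemma K_lb c c0 : (forall z, Pi P Sigma z -> c0 <= Lin c z) ->
  forall z, K z -> c0 <= Lin c z.
Proof. by move=> h; apply: Lin_closure; apply: Lin_hull. Qed.

Lemma K_conv z y (t : R) : K z -> Pi P Sigma y -> 0 <= t <= 1 ->
  K (fun x => (1 - t) * z x + t * y x).
Proof.
move=> Kz Py t01.
have := closure_pre (U := T) (f := fun z : T => ((fun x => (1 - t) * z x + t * y x) : T))
  (H := conv_hull (Pi P Sigma)) (D := closure (conv_hull (Pi P Sigma) : set T)) (@affine_cont _ _ _ _ _ _)
  (@closed_closure _ _).
apply => // w Hw; apply: subset_closure; exact: hull_add.
Qed.
Lemma dist_le1 (I : finType) (p : I -> R) : is_dist p -> forall t, 0 <= p t <= 1.
Proof.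
move=> [p0 p1] t; rewrite p0 /= -p1 (bigD1 t) //= lerDl.
by apply: sumr_ge0 => i _.
Qed.

Hypothesis HP : forall p, P p -> is_dist p.
Hypothesis HS : forall s, Sigma s -> is_experiment s.

Lemma K_box z : K z -> forall x, 0 <= z x <= 1.
Proof.
move=> Kz x.
have HD : forall w, conv_hull (Pi P Sigma) w ->
    ([set r | 0 <= r] `&` [set r | r <= 1]) (w x).
  move=> w [n [l [y [l0 [l1 [Sy ->]]]]]].
  have hy : forall i, 0 <= y i x <= 1.
    move=> i; have [p Pp [s Ss <-]] := Sy i.
    have /andP[a1 a2] := dist_le1 (HP Pp) x.1.
    have /andP[b1 b2] := dist_le1 (HS Ss x.1) x.2.
    rewrite /joint; apply/andP; split; first exact: mulr_ge0.
    by rewrite -[1]mulr1; apply: ler_pM.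
  split.
    by apply: sumr_ge0 => i _; apply: mulr_ge0 => //; case/andP: (hy i).
  rewrite /= -l1; apply: ler_sum => i _; rewrite -[X in _ <= X]mulr1.
  by apply: ler_wpM2l => //; case/andP: (hy i).
have [h1 h2] := closure_pre (U := R) (f := fun z : T => z x)
  (H := conv_hull (Pi P Sigma)) (D := [set r | 0 <= r] `&` [set r | r <= 1])
  (@coord_cont _ _ _ x) (closedI (closed_ge (y := 0)) (closed_le (y := 1))) HD Kz.
by rewrite h1 h2.
Qed.

Lemma K_compact : compact (K : set T).
Proof.
have Bc := @tychonoff (Omega * A)%type (fun _ => R) (fun _ => `[0, 1]%classic)
  (fun _ => @segment_compact R 0 1).
apply: (subclosed_compact _ Bc); first exact: closed_closure.
move=> z Kz x; have := K_box Kz x; by rewrite /= in_itv /=.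
Qed.
Definition ctau (tau : A -> A -> R) : Omega * A -> R :=
  fun wm => \sum_(x : A) tau wm.2 x * u x wm.1.

Lemma sum_delta (f : A -> R) b : \sum_(x : A) (if x == b then 1 else 0) * f x = f b.
Proof.
rewrite (bigD1 b) //= eqxx mul1r big1 ?addr0 // => x /negbTE ->; exact: mul0r.
Qed.

Lemma sum_delta1 b : \sum_(x : A) (if x == b then 1 else 0) = 1 :> R.
Proof.
rewrite -[RHS](sum_delta (fun _ => 1) b); apply: eq_bigr => x _; by rewrite mulr1.
Qed.

Lemma ctau_ob w m : ctau (@obedient R A) (w, m) = u m w.
Proof.
rewrite /ctau /= -(sum_delta (fun x => u x w) m); apply: eq_bigr => x _.
by rewrite /obedient eq_sym.
Qed.

Definition dev (a b : A) : A -> A -> R :=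
  fun m x => if m == a then (if x == b then 1 else 0) else @obedient R A m x.

Lemma ctau_dev a b w m : ctau (dev a b) (w, m) = if m == a then u b w else u m w.
Proof.
rewrite /ctau /dev /=; case: eqP => _; first exact: sum_delta.
by rewrite -(ctau_ob w m).
Qed.

Lemma dev_aa a : dev a a = @obedient R A.
Proof.
apply/funext => m; apply/funext => x; rewrite /dev /obedient.
by case: eqP => // ->; rewrite eq_sym.
Qed.

Lemma ob_strat : is_strategy (@obedient R A).
Proof.
move=> m; split; first by move=> x; rewrite /obedient; case: eqP.
rewrite -(sum_delta1 m); apply: eq_bigr => x _; by rewrite /obedient eq_sym.
Qed.

Lemma dev_strat a b : is_strategy (dev a b).
Proof.
move=> m; rewrite /dev; case: eqP => _; last exact: ob_strat.
split; [by move=> x; case: eqP|exact: sum_delta1].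
Qed.

Lemma ur_Lin p s tau : ur u p s tau = Lin (ctau tau) (joint p s).
Proof.
rewrite /ur /Lin; apply: eq_bigr => w _; apply: eq_bigr => m _.
rewrite /joint /ctau /= mulr_sumr; apply: eq_bigr => x _; by rewrite !mulrA.
Qed.

Lemma exp_Lin pi : exp_util u pi = Lin (ctau (@obedient R A)) pi.
Proof.
rewrite /exp_util /Lin exchange_big; apply: eq_bigr => w _; apply: eq_bigr => m _.
by rewrite ctau_ob.
Qed.

Lemma Lin_dev_diff a b pi :
  Lin (ctau (dev a b)) pi - Lin (ctau (@obedient R A)) pi =
  \sum_(w : Omega) pi (w, a) * (u b w - u a w).
Proof.
rewrite /Lin -sumrB; apply: eq_bigr => w _; rewrite -sumrB (bigD1 a) //=.
rewrite ctau_dev ctau_ob eqxx big1 ?addr0; first by rewrite mulrBr.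
by move=> m /negbTE mn; rewrite ctau_dev ctau_ob mn subrr.
Qed.

Lemma ur_mix (I : finType) (k : I -> R) (ts : I -> A -> A -> R) p s :
  ur u p s (fun m x => \sum_(i : I) k i * ts i m x) =
  \sum_(i : I) k i * ur u p s (ts i).
Proof.
rewrite /ur.
rewrite [RHS](eq_bigr (fun i => \sum_w \sum_m \sum_x
   k i * (p w * s w m * ts i m x * u x w))); last first.
  move=> i _; rewrite mulr_sumr; apply: eq_bigr => w _; rewrite mulr_sumr.
  by apply: eq_bigr => m _; rewrite mulr_sumr.
rewrite [RHS]exchange_big; apply: eq_bigr => w _.
rewrite [RHS]exchange_big; apply: eq_bigr => m _.
rewrite [RHS]exchange_big; apply: eq_bigr => x _.
rewrite mulr_sumr mulr_suml; apply: eq_bigr => i _; ring.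
Qed.

Definition Mb : R := \sum_(w : Omega) \sum_(m : A) \sum_(x : A) `|u x w|.

Lemma ur_bound tau p s : is_strategy tau -> P p -> Sigma s -> - Mb <= ur u p s tau.
Proof.
move=> Ht Pp Ss; rewrite /ur /Mb -sumrN; apply: ler_sum => w _.
rewrite -sumrN; apply: ler_sum => m _; rewrite -sumrN; apply: ler_sum => x _.
have /andP[a1 a2] := dist_le1 (HP Pp) w.
have /andP[b1 b2] := dist_le1 (HS Ss w) m.
have /andP[c1 c2] := dist_le1 (Ht m) x.
have q0 : 0 <= p w * s w m * tau m x by rewrite !mulr_ge0.
have q1 : p w * s w m * tau m x <= 1.
  by rewrite -[1]mulr1 ler_pM // ?mulr_ge0 // -[1]mulr1 ler_pM.
have h1 := ler_norm (u x w). have h2 := ler_norm (- u x w); rewrite normrN in h2.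
have h3 := normr_ge0 (u x w).
nra.
Qed.

Lemma Ur_le tau p s : is_strategy tau -> P p -> Sigma s ->
  Ur u P Sigma tau <= ur u p s tau.
Proof.
move=> Ht Pp Ss; apply: ge_inf.
  by exists (- Mb) => y [p' Pp' [s' Ss' <-]]; apply: ur_bound.
by exists p => //; exists s.
Qed.

Lemma Ur_ge tau c0 : P !=set0 -> Sigma !=set0 ->
  (forall p s, P p -> Sigma s -> c0 <= ur u p s tau) -> c0 <= Ur u P Sigma tau.
Proof.
move=> [p0 Pp0] [s0 Ss0] h; apply: lb_le_inf.
  by exists (ur u p0 s0 tau); exists p0 => //; exists s0.
by move=> y [p Pp [s Ss <-]]; apply: h.
Qed.
Lemma dir2 : P !=set0 -> Sigma !=set0 ->
  (exists pi, Kstar u P Sigma pi /\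
     forall a b : A, \sum_(w : Omega) pi (w, a) * (u b w - u a w) <= 0) ->
  BR u P Sigma (@obedient R A).
Proof.
move=> P0 S0 [pi [[Kpi minpi] obd]].
split; first exact: ob_strat.
move=> tau' Ht.
have h1 : Ur u P Sigma tau' <= Lin (ctau tau') pi.
  apply: (K_lb _ Kpi) => z [p Pp [s Ss <-]]; rewrite -ur_Lin; exact: Ur_le.
have h2 : Lin (ctau tau') pi <= Lin (ctau (@obedient R A)) pi.
  rewrite -subr_le0.
  have -> : Lin (ctau tau') pi - Lin (ctau (@obedient R A)) pi =
      \sum_m \sum_x tau' m x * \sum_w pi (w, m) * (u x w - u m w).
    rewrite /Lin -sumrB.
    transitivity (\sum_w \sum_m \sum_x tau' m x * (pi (w, m) * (u x w - u m w))).
      apply: eq_bigr => w _; rewrite -sumrB; apply: eq_bigr => m _.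
      rewrite ctau_ob -mulrBr /ctau /=.
      have e : u m w = \sum_x tau' m x * u m w by rewrite -mulr_suml (Ht m).2 mul1r.
      rewrite [X in _ - X]e -sumrB mulr_sumr; apply: eq_bigr => x _; ring.
    rewrite exchange_big; apply: eq_bigr => m _.
    rewrite exchange_big; apply: eq_bigr => x _.
    by rewrite mulr_sumr.
  apply: sumr_le0 => m _; apply: sumr_le0 => x _.
  by apply: mulr_ge0_le0; [exact: (Ht m).1|exact: obd].
have h3 : Lin (ctau (@obedient R A)) pi <= Ur u P Sigma (@obedient R A).
  rewrite -exp_Lin; apply: Ur_ge => // p s Pp Ss.
  by rewrite ur_Lin -exp_Lin; apply: minpi; apply: Pi_sub; exists p => //; exists s.
by apply: le_trans h3; apply: le_trans h2.
Qed.
Lemma dir1 : P !=set0 -> Sigma !=set0 ->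
  BR u P Sigma (@obedient R A) ->
  (exists pi, Kstar u P Sigma pi /\
     forall a b : A, \sum_(w : Omega) pi (w, a) * (u b w - u a w) <= 0).
Proof.
move=> P0 S0 [_ hBR].
have [a0 _] : exists a : A, True.
  case: P0 => p0 Pp0; case: S0 => s0 Ss0.
  have [_ p1] := HP Pp0.
  case: (pickP (@predT Omega)) => [w _|none]; last first.
    move: p1; rewrite (eq_bigl (fun _ => false)) ?big_pred0_eq; first by move=> h; lra.
    by move=> w; exact: none w.
  have [_ s1] := HS Ss0 w.
  case: (pickP (@predT A)) => [a _|none]; first by exists a.
  move: s1; rewrite (eq_bigl (fun _ => false)) ?big_pred0_eq; first by move=> h; lra.
  by move=> a; exact: none a.
set v := Ur u P Sigma (@obedient R A).
have Hv : forall z, K z -> v <= Lin (ctau (@obedient R A)) z.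
  apply: K_lb => z [p Pp [s Ss <-]]; rewrite -ur_Lin; apply: Ur_le => //.
  exact: ob_strat.
pose F (z : Omega * A -> R) (ab : A * A) := Lin (ctau (dev ab.1 ab.2)) z - v.
pose phi (z : T) := \sum_(ab : A * A) Order.max (F z ab) 0 * Order.max (F z ab) 0.
have phic : continuous phi.
  apply: sum_cont => ab z.
  have hF : {for z, continuous (fun z : T => F z ab)}.
    rewrite /F; apply: continuousD; first exact: Lin_cont.
    exact: cst_continuous.
  have hM : {for z, continuous (fun z : T => Order.max (F z ab) 0 : R^o)}.
    apply: (continuous_max (f := fun z : T => F z ab) (g := fun _ => 0)) => //.
    exact: cst_continuous.
  exact: (continuousM hM hM).
have K0 : (K : set T) !=set0.
  case: P0 => p0 Pp0; case: S0 => s0 Ss0.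
  by exists (joint p0 s0); apply: Pi_sub; exists p0 => //; exists s0.
have [pi1 Kpi1 pmin] := @compact_EVT_min T R phi K K0 K_compact (continuous_subspaceT phic).
have Kpi1' : K pi1 by move: Kpi1; rewrite inE.
have vle : v <= Lin (ctau (@obedient R A)) pi1 := Hv _ Kpi1'.
case: (boolP [forall ab, F pi1 ab <= 0]) => [/forallP allneg | /forallPn [ab0 pos]].
  exists pi1; split.
    split => // pi' Kpi'.
    rewrite !exp_Lin; apply: le_trans (Hv _ Kpi').
    by have := allneg (a0, a0); rewrite /F /= dev_aa subr_le0.
  move=> a b; rewrite -Lin_dev_diff.
  have := allneg (a, b); rewrite /F /= => h; lra.
exfalso.
rewrite -ltNge in pos.
pose lam ab := Order.max (F pi1 ab) 0.
have lam0 : forall ab, 0 <= lam ab.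
  by move=> ab; rewrite /lam le_max lexx orbT.
have lamab0 : lam ab0 = F pi1 ab0 by rewrite /lam max_l // ltW.
pose L := \sum_(ab : A * A) lam ab.
have L0 : 0 < L.
  rewrite /L (bigD1 ab0) //= lamab0; apply: ltr_pwDl => //.
  by apply: sumr_ge0 => ab _.
have phi1 : phi pi1 = \sum_ab lam ab * lam ab by [].
have eta0 : 0 < phi pi1.
  rewrite phi1 (bigD1 ab0) //= lamab0; apply: ltr_pwDl; first exact: mulr_gt0.
  by apply: sumr_ge0 => ab _; apply: mulr_ge0.
have key : forall z, Pi P Sigma z -> phi pi1 <= \sum_ab lam ab * F z ab.
  move=> z Pz; rewrite leNgt; apply/negP => hlt.
  pose d ab := F z ab - F pi1 ab.
  pose S' := \sum_ab lam ab * d ab.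
  have eS : \sum_ab lam ab * F pi1 ab = phi pi1.
    by rewrite phi1; apply: eq_bigr => ab _; rewrite /lam maxmul.
  have S'neg : S' < 0.
    have -> : S' = \sum_ab lam ab * F z ab - \sum_ab lam ab * F pi1 ab.
      by rewrite /S' -sumrB; apply: eq_bigr => ab _; rewrite /d mulrBr.
    rewrite eS; lra.
  pose Q := \sum_ab d ab * d ab.
  have Q0 : 0 <= Q by apply: sumr_ge0 => ab _; rewrite -expr2 sqr_ge0.
  pose t := if Q <= - S' then 1 else - S' / Q.
  have [t0 t1 tQ] : [/\ 0 < t, t <= 1 & t * Q <= - S'].
    rewrite /t; case: ifP => hQ; first by split => //; rewrite mul1r.
    move/negbT: hQ; rewrite -ltNge => hQ.
    have Qp : 0 < Q by lra.
    split.
    - by apply: divr_gt0 => //; lra.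
    - by rewrite ler_pdivrMr // mul1r; apply: ltW.
    - by rewrite divfK //; apply: lt0r_neq0.
  pose zt := fun x => (1 - t) * pi1 x + t * z x.
  have Kzt : K zt by apply: K_conv => //; rewrite ltW.
  have Fzt : forall ab, F zt ab = F pi1 ab + t * d ab.
    by move=> ab; rewrite /d /F /zt Lin_comb; ring.
  have hzt : phi zt <= phi pi1 + 2 * t * S' + t * t * Q.
    have -> : phi pi1 + 2 * t * S' + t * t * Q = \sum_ab (lam ab * lam ab +
        2 * lam ab * (t * d ab) + (t * d ab) * (t * d ab)).
      rewrite phi1 /S' /Q !mulr_sumr -!big_split /=; apply: eq_bigr => ab _; ring.
    apply: ler_sum => ab _; rewrite Fzt; exact: maxsq.
  have := pmin zt (mem_set Kzt).
  have h1 : t * (t * Q) <= t * (- S') by apply: ler_wpM2l => //; exact: ltW.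
  have h2 : 0 < t * (- S') by apply: mulr_gt0 => //; lra.
  move=> hmin; nra.
pose tau := fun m x => \sum_(ab : A * A) (lam ab / L) * dev ab.1 ab.2 m x.
have Htau : is_strategy tau.
  move=> m; split.
    move=> x; apply: sumr_ge0 => ab _; apply: mulr_ge0.
      by apply: divr_ge0 => //; exact: ltW.
    exact: (dev_strat ab.1 ab.2 m).1.
  rewrite /tau exchange_big /=.
  under eq_bigr do rewrite -mulr_sumr (dev_strat _ _ m).2 mulr1.
  by rewrite -mulr_suml divff //; apply: lt0r_neq0.
have hge : v + phi pi1 / L <= Ur u P Sigma tau.
  apply: Ur_ge => // p s Pp Ss.
  have Pz : Pi P Sigma (joint p s) by exists p => //; exists s.
  have kz := key _ Pz.
  rewrite /tau ur_mix.
  have -> : \sum_(ab : A * A) lam ab / L * ur u p s (dev ab.1 ab.2) =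
      (\sum_ab lam ab * F (joint p s) ab) / L + v * (\sum_ab lam ab / L).
    rewrite mulr_suml mulr_sumr -big_split /=; apply: eq_bigr => ab _.
    by rewrite ur_Lin /F; ring.
  rewrite -mulr_suml divff ?mulr1; last exact: lt0r_neq0.
  by rewrite [X in _ <= X]addrC lerD2l ler_pM2r // invr_gt0.
have := hBR tau Htau; rewrite -/v => hle.
have : 0 < phi pi1 / L by apply: divr_gt0.
lra.
Qed.
End Model.

Unset Implicit Arguments. Set Strict Implicit.

Theorem mainTheorem6 (R : realType) (Omega A : finType)
  (u : A -> Omega -> R) (P : set (Omega -> R))
  (Sigma : set (Omega -> A -> R)) :
  (* P: nonempty closed convex set of priors *)
  P !=set0 -> @closed {ptws Omega -> R} P -> convex_fset P -> (forall p, P p -> is_dist p) ->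
  (* Sigma: canonical ambiguous experiment *)
  Sigma !=set0 -> @closed {ptws Omega -> {ptws A -> R}} Sigma -> convex_exp Sigma ->
  (forall s, Sigma s -> is_experiment s) ->
  (BR u P Sigma (@obedient R A) <->
   exists pi, Kstar u P Sigma pi /\
     forall a b : A, \sum_(w : Omega) pi (w, a) * (u b w - u a w) <= 0).
Proof.
move=> P0 _ _ HP S0 _ _ HS; split.
- by apply: dir1.
- by apply: dir2.
Qed.
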